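(* Let $R\ge1$, $L\ge2$, and let $f_\theta,f_{\tilde\theta}\in\mathcal{N}_\rho(L,\boldsymbol n_L,R)$ share the same architecture, with parameter vectors $\theta,\tilde\theta\in\mathbb{R}^{\boldsymbol n_L}$. Set $\eta=1$ if $\rho$ is the sigmoid and $\eta=2$ if $\rho=\tanh$. Then for every $p\in\{1,\dots,d\}$ and $x\in\Omega$, $$|\partial_{x_p}^2f_\theta(x)-\partial_{x_p}^2f_{\tilde\theta}(x)|\le2(L-1)L\eta\sqrt{\boldsymbol n_L}\,\pi_{L-1}^3R^{3L-3}\|\theta-\tilde\theta\|_{\ell^2}.$$
   Context: $\Omega\subset(-1,1)^d$. Neural networks: widths $n_0=d,n_1,\dots,n_L=1$; $f^{(0)}(x)=x$, $f^{(\ell)}(x)=\rho(A^{(\ell)}f^{(\ell-1)}(x)+b^{(\ell)})$ for $\ell=1,\dots,L-1$ (componentwise $\rho$), $f_\theta=A^{(L)}f^{(L-1)}+b^{(L)}$, with $A^{(\ell)}\in\mathbb{R}^{n_\ell\times n_{\ell-1}}$, $b^{(\ell)}\in\mathbb{R}^{n_\ell}$; $\theta$ is the vector of all parameters (entries of all $A^{(\ell)},b^{(\ell)}$), $\boldsymbol n_L$ its number of (nonzero) entries; $\mathcal{N}_\rho(L,\boldsymbol n_L,R)$ is the class of such networks with all parameters bounded in absolute value by $R$. $\pi_i=\prod_{j=1}^in_j$. $\rho$ is $\tanh$ or the sigmoid $1/(1+e^{-t})$. *)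

(* Defs.v *)
From Stdlib Require Import Reals Lra.
From Coquelicot Require Import Coquelicot.
Open Scope R_scope.

Fixpoint sumR (n : nat) (f : nat -> R) : R :=
  match n with O => 0 | S k => sumR k f + f k end.

Fixpoint prod_widths (ns : nat -> nat) (m : nat) : nat :=
  match m with O => 1%nat | S k => (prod_widths ns k * ns (S k))%nat end.

Inductive activation := Sigmoid | Tanh.

Definition tanhR (t : R) : R := (exp t - exp (- t)) / (exp t + exp (- t)).
Definition sigmoid (t : R) : R := 1 / (1 + exp (- t)).

Definition rho (a : activation) (t : R) : R :=
  match a with Sigmoid => sigmoid t | Tanh => tanhR t end.

Definition eta (a : activation) : R :=
  match a with Sigmoid => 1 | Tanh => 2 end.

(** Architecture: widths ns 0 = d, ns 1, ..., ns L = 1.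
    Parameters: A l i j = entry (i,j) of A^(l) (0-based i < ns l, j < ns (l-1)),
                b l i   = entry i of b^(l), layers l = 1..L. *)
Record params := mkParams { pA : nat -> nat -> nat -> R; pb : nat -> nat -> R }.

Fixpoint hidden (a : activation) (ns : nat -> nat) (th : params) (l : nat)
    (x : nat -> R) : nat -> R :=
  match l with
  | O => x
  | S k => fun i =>
      rho a (sumR (ns k) (fun j => pA th (S k) i j * hidden a ns th k x j)
             + pb th (S k) i)
  end.

Definition net (a : activation) (ns : nat -> nat) (L : nat) (th : params)
    (x : nat -> R) : R :=
  sumR (ns (L - 1)%nat) (fun j => pA th L 0%nat j * hidden a ns th (L - 1) x j)
  + pb th L 0%nat.

Definition num_params (ns : nat -> nat) (L : nat) : nat :=
  let fix go l := match l with
    | O => O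
    | S k => (go k + ns (S k) * ns k + ns (S k))%nat end in go L.

Definition params_bounded (ns : nat -> nat) (L : nat) (Rb : R) (th : params) : Prop :=
  forall l, (1 <= l <= L)%nat ->
    (forall i j, (i < ns l)%nat -> (j < ns (l - 1))%nat -> Rabs (pA th l i j) <= Rb) /\
    (forall i, (i < ns l)%nat -> Rabs (pb th l i) <= Rb).

Definition param_dist (ns : nat -> nat) (L : nat) (th th' : params) : R :=
  sqrt (sumR L (fun k =>
          sumR (ns (S k)) (fun i =>
            sumR (ns k) (fun j => (pA th (S k) i j - pA th' (S k) i j) ^ 2)
            + (pb th (S k) i - pb th' (S k) i) ^ 2))).

Definition upd (x : nat -> R) (p : nat) (t : R) : nat -> R :=
  fun i => if Nat.eqb i p then t else x i.

Definition dxx (F : (nat -> R) -> R) (p : nat) (x : nat -> R) : R :=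
  Derive_n (fun t => F (upd x p t)) 2 (x p).

(* Main.v *)
Require Import Defs.
From Stdlib Require Import Reals Lra Psatz Lia.
From Coquelicot Require Import Coquelicot.
Open Scope R_scope.

Definition rho1 (a : activation) (t : R) : R :=
  match a with Sigmoid => sigmoid t * (1 - sigmoid t) | Tanh => 1 - tanhR t ^ 2 end.
Definition rho2 (a : activation) (t : R) : R :=
  match a with Sigmoid => sigmoid t * (1 - sigmoid t) * (1 - 2 * sigmoid t)
             | Tanh => -2 * tanhR t * (1 - tanhR t ^ 2) end.
Definition rho3 (a : activation) (t : R) : R :=
  match a with Sigmoid => sigmoid t * (1 - sigmoid t) * (1 - 6 * sigmoid t + 6 * sigmoid t ^ 2)
             | Tanh => -2 * (1 - tanhR t ^ 2) * (1 - 3 * tanhR t ^ 2) end.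
Definition kap (a : activation) : R := match a with Sigmoid => /4 | Tanh => 1 end.

Lemma sigmoid_deriv t : is_derive sigmoid t (sigmoid t * (1 - sigmoid t)).
Proof.
  unfold sigmoid. auto_derive.
  - pose proof (exp_pos (-t)). lra.
  - pose proof (exp_pos (-t)). field. lra.
Qed.

Lemma tanh_deriv t : is_derive tanhR t (1 - tanhR t ^ 2).
Proof.
  unfold tanhR. auto_derive.
  - pose proof (exp_pos (-t)). pose proof (exp_pos t). lra.
  - pose proof (exp_pos (-t)). pose proof (exp_pos t). field. lra.
Qed.

Lemma sigmoid_range t : 0 <= sigmoid t <= 1.
Proof.
  unfold sigmoid. pose proof (exp_pos (-t)).
  split.
  - apply Rlt_le. apply Rdiv_lt_0_compat; lra.
  - apply Rle_div_l; lra.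
Qed.

Lemma tanh_range t : -1 <= tanhR t <= 1.
Proof.
  unfold tanhR. pose proof (exp_pos (-t)). pose proof (exp_pos t).
  set (u := exp t) in *. set (v := exp (-t)) in *.
  assert (Hw : (u - v) / (u + v) * (u + v) = u - v) by (field; lra).
  set (T := (u - v) / (u + v)) in *. nra.
Qed.

Lemma poly_comp_deriv (S : R -> R) (q : R -> R) (g g' : R -> R) t :
  (forall y, is_derive S y (q (S y))) ->
  (forall y, is_derive g y (g' y)) ->
  is_derive (fun y => g (S y)) t (g' (S t) * q (S t)).
Proof.
  intros HS Hg. 
  assert (H := is_derive_comp g S t (g' (S t)) (q (S t)) (Hg (S t)) (HS t)).
  replace (g' (S t) * q (S t)) with (scal (q (S t)) (g' (S t))); [exact H|].
  unfold scal; simpl; unfold mult; simpl. ring.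
Qed.

Lemma rho_deriv a t : is_derive (rho a) t (rho1 a t).
Proof. destruct a; simpl; [apply sigmoid_deriv | apply tanh_deriv]. Qed.

Lemma rho1_deriv a t : is_derive (rho1 a) t (rho2 a t).
Proof.
  destruct a; simpl.
  - assert (H := poly_comp_deriv sigmoid (fun s => s * (1 - s)) (fun s => s * (1 - s))
      (fun s => 1 - 2 * s) t sigmoid_deriv ltac:(intros; auto_derive; [auto|ring])).
    simpl in H. eapply is_derive_ext; [|refine (eq_ind _ _ H _ _)]; [intros; reflexivity| ring].
  - assert (H := poly_comp_deriv tanhR (fun s => 1 - s ^ 2) (fun s => 1 - s ^ 2)
      (fun s => - 2 * s) t tanh_deriv ltac:(intros; auto_derive; [auto|ring])).
    simpl in H. refine (eq_ind _ _ H _ _). ring.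
Qed.

Lemma rho2_deriv a t : is_derive (rho2 a) t (rho3 a t).
Proof.
  destruct a; simpl.
  - assert (H := poly_comp_deriv sigmoid (fun s => s * (1 - s)) (fun s => s * (1 - s) * (1 - 2 * s))
      (fun s => 1 - 6 * s + 6 * s ^ 2) t sigmoid_deriv ltac:(intros; auto_derive; [auto|ring])).
    simpl in H. refine (eq_ind _ _ H _ _). ring.
  - assert (H := poly_comp_deriv tanhR (fun s => 1 - s ^ 2) (fun s => -2 * s * (1 - s ^ 2))
      (fun s => - 2 + 6 * s ^ 2) t tanh_deriv ltac:(intros; auto_derive; [auto|ring])).
    simpl in H. refine (eq_ind _ _ H _ _). ring.
Qed.

Lemma rho_bound a t : Rabs (rho a t) <= 1.
Proof.
  destruct a; simpl.
  - pose proof (sigmoid_range t). apply Rabs_le; lra.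
  - pose proof (tanh_range t). apply Rabs_le; lra.
Qed.

Lemma rho1_bound a t : Rabs (rho1 a t) <= 1.
Proof.
  destruct a; simpl.
  - pose proof (sigmoid_range t). apply Rabs_le; nra.
  - pose proof (tanh_range t). apply Rabs_le; nra.
Qed.

Lemma rho2_bound a t : Rabs (rho2 a t) <= kap a.
Proof.
  destruct a; simpl.
  - pose proof (sigmoid_range t). set (s := sigmoid t) in *.
    assert (0 <= s * (1 - s) <= /4) by (pose proof (pow2_ge_0 (s - /2)); nra).
    apply Rabs_le; split; nra.
  - pose proof (tanh_range t). set (T := tanhR t) in *.
    assert (H2: (2 * T * (1 - T^2))^2 <= 1).
    { set (s := T^2). assert (0 <= s <= 1) by (unfold s; nra).
      replace ((2 * T * (1 - s))^2) with (4 * s * (1 - s)^2) by (unfold s; ring).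
      assert (Hp : forall a b, 0 <= a -> b <= 1 -> a <= s <= b -> 4 * s * (1 - s)^2 <= 4 * b * ((1 - a) * (1 - a))).
      { intros a0 b0 ? ? ?. assert ((1 - s)^2 <= (1 - a0) * (1 - a0)).
        { simpl. rewrite !Rmult_1_r. apply Rmult_le_compat; lra. }
        apply Rmult_le_compat; [lra| apply pow2_ge_0| lra| auto]. }
      destruct (Rle_lt_dec s (1/4)); [pose proof (Hp 0 (1/4) ltac:(lra) ltac:(lra) ltac:(lra)); lra|].
      destruct (Rle_lt_dec s (2/5)); [pose proof (Hp (1/4) (2/5) ltac:(lra) ltac:(lra) ltac:(lra)); lra|].
      destruct (Rle_lt_dec s (3/5)); [pose proof (Hp (2/5) (3/5) ltac:(lra) ltac:(lra) ltac:(lra)); lra|pose proof (Hp (3/5) 1 ltac:(lra) ltac:(lra) ltac:(lra)); lra]. }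
    set (y := 2 * T * (1 - T^2)) in *.
    match goal with |- Rabs ?e <= _ => replace e with (-y) by (unfold y; ring) end.
    apply Rabs_le; split; destruct (Rle_lt_dec y 0); nra.
Qed.

Lemma rho3_bound a t : Rabs (rho3 a t) <= 2 * kap a.
Proof.
  destruct a; simpl.
  - pose proof (sigmoid_range t). set (s := sigmoid t) in *.
    assert (0 <= s * (1 - s) <= /4) by (pose proof (pow2_ge_0 (s - /2)); nra).
    assert (-1 <= 1 - 6 * s + 6 * s ^ 2 <= 1) by nra.
    apply Rabs_le; split; nra.
  - pose proof (tanh_range t). set (T := tanhR t) in *.
    set (s := T^2). assert (0 <= s <= 1) by (unfold s; nra).
    match goal with |- Rabs ?e <= _ => replace e with (-2 * (1 - s) * (1 - 3 * s)) by (unfold s; ring) end.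
    assert (Hw : 0 <= 1 - s <= 1) by lra.
    apply Rabs_le; destruct (Rle_lt_dec s (2/3)).
    + assert (-1 <= 1 - 3 * s <= 1) by lra. split; nra.
    + assert (-2 <= 1 - 3 * s <= -1) by lra. assert (1 - s <= 1/3) by lra. split; nra.
Qed.

Lemma lip_of_deriv (f f' : R -> R) C :
  (forall y, is_derive f y (f' y)) -> (forall y, Rabs (f' y) <= C) ->
  forall u v, Rabs (f u - f v) <= C * Rabs (u - v).
Proof.
  intros Hd Hb u v.
  destruct (MVT_gen f v u f') as [c [_ Hc]].
  - intros; apply Hd.
  - intros y _. apply derivable_continuous_pt. exists (f' y). apply is_derive_Reals. apply Hd.
  - rewrite Hc, Rabs_mult. apply Rmult_le_compat_r; [apply Rabs_pos| apply Hb].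
Qed.

Lemma kap_le1 a : 0 <= kap a <= 1.
Proof. destruct a; simpl; lra. Qed.
Lemma kap_eta a : 4 * kap a <= 2 * eta a.
Proof. destruct a; simpl; lra. Qed.

Lemma sumR_ext n f g : (forall i, (i < n)%nat -> f i = g i) -> sumR n f = sumR n g.
Proof. induction n; simpl; intros H; auto. rewrite IHn by (intros; apply H; lia). rewrite H by lia. auto. Qed.
Lemma sumR_plus n f g : sumR n (fun i => f i + g i) = sumR n f + sumR n g.
Proof. induction n; simpl; [lra|]. rewrite IHn. lra. Qed.
Lemma sumR_minus n f g : sumR n (fun i => f i - g i) = sumR n f - sumR n g.
Proof. induction n; simpl; [lra|]. rewrite IHn. lra. Qed.
Lemma sumR_scal n c f : sumR n (fun i => c * f i) = c * sumR n f.
Proof. induction n; simpl; [lra|]. rewrite IHn. lra. Qed.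
Lemma sumR_const n c : sumR n (fun _ => c) = INR n * c.
Proof. induction n; simpl sumR; [simpl; lra|]. rewrite IHn, S_INR. lra. Qed.
Lemma sumR_le n f g : (forall i, (i < n)%nat -> f i <= g i) -> sumR n f <= sumR n g.
Proof. induction n; simpl; intros H; [lra|]. pose proof (H n ltac:(lia)). pose proof (IHn ltac:(intros; apply H; lia)). lra. Qed.
Lemma sumR_nonneg n f : (forall i, (i < n)%nat -> 0 <= f i) -> 0 <= sumR n f.
Proof. intros H. replace 0 with (sumR n (fun _ => 0)). apply sumR_le; auto. rewrite sumR_const; lra. Qed.
Lemma sumR_abs n f : Rabs (sumR n f) <= sumR n (fun i => Rabs (f i)).
Proof. induction n; simpl; [rewrite Rabs_R0; lra|]. eapply Rle_trans; [apply Rabs_triang|]. lra. Qed.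
Lemma term_le n f i : (forall j, (j < n)%nat -> 0 <= f j) -> (i < n)%nat -> f i <= sumR n f.
Proof.
  induction n; intros H Hi; [lia|]. simpl.
  destruct (Nat.eq_dec i n).
  - subst. pose proof (sumR_nonneg n f ltac:(intros; apply H; lia)). lra.
  - pose proof (IHn ltac:(intros; apply H; lia) ltac:(lia)). pose proof (H n ltac:(lia)). lra.
Qed.
Lemma sumR_abs_nonneg n f : 0 <= sumR n (fun i => Rabs (f i)).
Proof. apply sumR_nonneg. intros; apply Rabs_pos. Qed.

Lemma lin_bound n (c v : nat -> R) C V : 0 <= C ->
  (forall j, (j < n)%nat -> Rabs (c j) <= C) -> sumR n (fun j => Rabs (v j)) <= V ->
  Rabs (sumR n (fun j => c j * v j)) <= C * V.
Proof.
  intros HC Hc HV. eapply Rle_trans; [apply sumR_abs|].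
  apply Rle_trans with (sumR n (fun j => C * Rabs (v j))).
  - apply sumR_le. intros j Hj. rewrite Rabs_mult. apply Rmult_le_compat_r; [apply Rabs_pos| auto].
  - rewrite sumR_scal. apply Rmult_le_compat_l; auto.
Qed.

Lemma lin_bound2 n (c v : nat -> R) M : 0 <= M ->
  (forall j, (j < n)%nat -> Rabs (v j) <= M) ->
  Rabs (sumR n (fun j => c j * v j)) <= sumR n (fun j => Rabs (c j)) * M.
Proof.
  intros HM Hv. eapply Rle_trans; [apply sumR_abs|].
  rewrite Rmult_comm, <- sumR_scal. apply sumR_le. intros j Hj. rewrite Rabs_mult.
  rewrite Rmult_comm. apply Rmult_le_compat_r; [apply Rabs_pos| auto].
Qed.

Lemma is_derive_eq (f : R -> R) (x l l' : R) : is_derive f x l -> @eq R l l' -> is_derive f x l'.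
Proof. intros H ->; exact H. Qed.

Lemma is_derive_constR (c t : R) : is_derive (fun _ => c) t 0.
Proof. apply is_derive_Reals. apply derivable_pt_lim_const. Qed.
Lemma is_derive_idR (t : R) : is_derive (fun y => y) t 1.
Proof. apply is_derive_Reals. apply derivable_pt_lim_id. Qed.
Lemma is_derive_plusR (f g : R -> R) t df dg : is_derive f t df -> is_derive g t dg ->
  is_derive (fun y => f y + g y) t (df + dg).
Proof. intros. apply is_derive_Reals. apply derivable_pt_lim_plus; apply is_derive_Reals; auto. Qed.
Lemma is_derive_multR (f g : R -> R) t df dg : is_derive f t df -> is_derive g t dg ->
  is_derive (fun y => f y * g y) t (df * g t + f t * dg).
Proof. intros. apply is_derive_Reals. apply derivable_pt_lim_mult; apply is_derive_Reals; auto. Qed.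
Lemma is_derive_compR (f g : R -> R) t df dg : is_derive f (g t) df -> is_derive g t dg ->
  is_derive (fun y => f (g y)) t (df * dg).
Proof. intros. apply is_derive_Reals. apply (derivable_pt_lim_comp g f); apply is_derive_Reals; auto. Qed.

Lemma is_derive_sumR n (F : nat -> R -> R) (F' : nat -> R) t :
  (forall j, (j < n)%nat -> is_derive (F j) t (F' j)) ->
  is_derive (fun t => sumR n (fun j => F j t)) t (sumR n F').
Proof.
  induction n; intros H; simpl.
  - apply is_derive_constR.
  - apply (is_derive_plusR (fun t => sumR n (fun j => F j t)) (F n)).
    + apply IHn; intros; apply H; lia.
    + apply H; lia.
Qed.

Definition zS a ns th x p k t i :=
  sumR (ns k) (fun j => pA th (S k) i j * hidden a ns th k (upd x p t) j) + pb th (S k) i.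

Fixpoint d1 a ns th x p l t : nat -> R :=
  match l with
  | O => fun i => if Nat.eqb i p then 1 else 0
  | S k => fun i => rho1 a (zS a ns th x p k t i) *
                    sumR (ns k) (fun j => pA th (S k) i j * d1 a ns th x p k t j)
  end.

Fixpoint d2 a ns th x p l t : nat -> R :=
  match l with
  | O => fun _ => 0
  | S k => fun i => rho2 a (zS a ns th x p k t i) *
                    (sumR (ns k) (fun j => pA th (S k) i j * d1 a ns th x p k t j)) ^ 2
                  + rho1 a (zS a ns th x p k t i) *
                    sumR (ns k) (fun j => pA th (S k) i j * d2 a ns th x p k t j)
  end.

Lemma deriv_hidden a ns th x p l : forall i t,
  is_derive (fun t => hidden a ns th l (upd x p t) i) t (d1 a ns th x p l t i) /\
  is_derive (fun t => d1 a ns th x p l t i) t (d2 a ns th x p l t i).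
Proof.
  induction l as [|k IH]; intros i t.
  - simpl. unfold upd. destruct (Nat.eqb i p).
    + split; [apply is_derive_idR| apply is_derive_constR].
    + split; apply is_derive_constR.
  - assert (Hz : forall t, is_derive (fun t => zS a ns th x p k t i) t
                   (sumR (ns k) (fun j => pA th (S k) i j * d1 a ns th x p k t j))).
    { intros t0. unfold zS. eapply is_derive_eq.
      - apply is_derive_plusR; [|apply is_derive_constR].
        apply (is_derive_sumR (ns k) (fun j t => pA th (S k) i j * hidden a ns th k (upd x p t) j)
                 (fun j => pA th (S k) i j * d1 a ns th x p k t0 j)).
        intros j _. apply is_derive_scal. apply (IH j t0).
      - ring. }
    assert (Hz1 : forall t, is_derive (fun t => sumR (ns k) (fun j => pA th (S k) i j * d1 a ns th x p k t j)) t
                   (sumR (ns k) (fun j => pA th (S k) i j * d2 a ns th x p k t j))).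
    { intros t0. apply (is_derive_sumR (ns k) (fun j t => pA th (S k) i j * d1 a ns th x p k t j)
                 (fun j => pA th (S k) i j * d2 a ns th x p k t0 j)).
      intros j _. apply is_derive_scal. apply (IH j t0). }
    split.
    + change (is_derive (fun t => rho a (zS a ns th x p k t i)) t (d1 a ns th x p (S k) t i)).
      eapply is_derive_eq.
      * apply (is_derive_compR (rho a) (fun t => zS a ns th x p k t i)); [apply rho_deriv| apply Hz].
      * simpl. ring.
    + change (is_derive (fun t => rho1 a (zS a ns th x p k t i) *
                    sumR (ns k) (fun j => pA th (S k) i j * d1 a ns th x p k t j)) t (d2 a ns th x p (S k) t i)).
      eapply is_derive_eq.
      * apply is_derive_multR; [|apply Hz1].
        apply (is_derive_compR (rho1 a) (fun t => zS a ns th x p k t i)); [apply rho1_deriv| apply Hz].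
      * simpl. ring.
Qed.

Lemma Derive2_spec (f g1 g2 : R -> R) y :
  (forall t, is_derive f t (g1 t)) -> (forall t, is_derive g1 t (g2 t)) ->
  Derive_n f 2 y = g2 y.
Proof.
  intros H1 H2. simpl.
  rewrite (Derive_ext _ g1).
  - apply is_derive_unique, H2.
  - intros t. apply is_derive_unique, H1.
Qed.

Lemma dxx_net a ns K th x p :
  dxx (net a ns (S K) th) p x =
  sumR (ns K) (fun j => pA th (S K) 0 j * d2 a ns th x p K (x p) j).
Proof.
  unfold dxx, net. replace (S K - 1)%nat with K by lia.
  apply (Derive2_spec _ (fun t => sumR (ns K) (fun j => pA th (S K) 0 j * d1 a ns th x p K t j))
                        (fun t => sumR (ns K) (fun j => pA th (S K) 0 j * d2 a ns th x p K t j))).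
  - intros t. eapply is_derive_eq.
    + apply is_derive_plusR; [|apply is_derive_constR].
      apply (is_derive_sumR (ns K) (fun j t => pA th (S K) 0 j * hidden a ns th K (upd x p t) j)
               (fun j => pA th (S K) 0 j * d1 a ns th x p K t j)).
      intros j _. apply is_derive_scal. apply (deriv_hidden a ns th x p K j t).
    + ring.
  - intros t. apply (is_derive_sumR (ns K) (fun j t => pA th (S K) 0 j * d1 a ns th x p K t j)
               (fun j => pA th (S K) 0 j * d2 a ns th x p K t j)).
    intros j _. apply is_derive_scal. apply (deriv_hidden a ns th x p K j t).
Qed.

Ltac pos := repeat (apply Rmult_le_pos || apply Rplus_le_le_0_compat || apply pow_le); try lra.

Definition pw (ns : nat -> nat) k := INR (prod_widths ns k).

Lemma pw_S ns k : pw ns (S k) = pw ns k * INR (ns (S k)).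
Proof. unfold pw. simpl prod_widths. rewrite mult_INR. auto. Qed.
Lemma pw_nonneg ns k : 0 <= pw ns k.
Proof. apply pos_INR. Qed.

Lemma INR_le_sq n : INR n <= INR n ^ 2.
Proof. destruct n. simpl; lra. pose proof (pos_INR n). rewrite S_INR. nra. Qed.
Lemma INR_le_cube n : INR n <= INR n ^ 3.
Proof. destruct n. simpl; lra. pose proof (pos_INR n). rewrite S_INR. nra. Qed.

Definition Ffacts a ns th x p Rb k t0 :=
  (forall j, (j < ns k)%nat -> Rabs (hidden a ns th k (upd x p t0) j) <= 1) /\
  sumR (ns k) (fun j => Rabs (d1 a ns th x p k t0 j)) <= Rb ^ k * pw ns k /\
  sumR (ns k) (fun j => Rabs (d2 a ns th x p k t0 j)) <= kap a * INR k * (Rb ^ k) ^ 2 * pw ns k ^ 2.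

Definition layerA ns th Rb k :=
  forall i j, (i < ns (S k))%nat -> (j < ns k)%nat -> Rabs (pA th (S k) i j) <= Rb.

Lemma sq_abs_le u U : Rabs u <= U -> u ^ 2 <= U ^ 2.
Proof. intros H. pose proof (Rabs_pos u). rewrite <- (pow2_abs u). apply pow_incr. lra. Qed.

Lemma arithF2 kp Rb r q K0 Z1 Z2 : 0 <= kp -> 1 <= Rb -> 0 <= r -> 0 <= q -> 0 <= K0 ->
  Z1 ^ 2 <= (Rb * r * q) ^ 2 -> Z2 <= Rb * (kp * K0 * r ^ 2 * q ^ 2) ->
  kp * Z1 ^ 2 + Z2 <= kp * (K0 + 1) * (Rb * r) ^ 2 * q ^ 2.
Proof.
  intros. assert (kp * Z1^2 <= kp * (Rb * r * q)^2) by (apply Rmult_le_compat_l; auto).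
  assert (0 <= kp * K0 * r^2 * q^2) by (repeat apply Rmult_le_pos; first [apply pow2_ge_0 | lra]).
  assert (Rb * (kp * K0 * r ^ 2 * q ^ 2) <= Rb^2 * (kp * K0 * r ^ 2 * q ^ 2)) by (apply Rmult_le_compat_r; nra).
  nra.
Qed.

Lemma F_step a ns th x p Rb k t0 : 1 <= Rb -> layerA ns th Rb k ->
  Ffacts a ns th x p Rb k t0 -> Ffacts a ns th x p Rb (S k) t0.
Proof.
  intros HR HA [H0 [H1 H2]].
  assert (Hr : 0 <= Rb ^ k) by (apply pow_le; lra).
  pose proof (pw_nonneg ns k) as Hq.
  set (r := Rb ^ k) in *. set (q := pw ns k) in *.
  assert (Hz1 : forall i, (i < ns (S k))%nat ->
     Rabs (sumR (ns k) (fun j => pA th (S k) i j * d1 a ns th x p k t0 j)) <= Rb * (r * q)).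
  { intros i Hi. apply lin_bound; [lra| |auto]. intros; apply HA; auto. }
  assert (Hz2 : forall i, (i < ns (S k))%nat ->
     Rabs (sumR (ns k) (fun j => pA th (S k) i j * d2 a ns th x p k t0 j)) <= Rb * (kap a * INR k * r ^ 2 * q ^ 2)).
  { intros i Hi. apply lin_bound; [lra| |auto]. intros; apply HA; auto. }
  split; [|split].
  - intros j Hj. simpl. apply rho_bound.
  - eapply Rle_trans.
    + apply (sumR_le _ _ (fun _ => Rb * (r * q))). intros i Hi. simpl.
      rewrite Rabs_mult. pose proof (rho1_bound a (zS a ns th x p k t0 i)).
      pose proof (Hz1 i Hi). pose proof (Rabs_pos (rho1 a (zS a ns th x p k t0 i))).
      pose proof (Rabs_pos (sumR (ns k) (fun j : nat => pA th (S k) i j * d1 a ns th x p k t0 j))). nra.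
    + rewrite sumR_const, pw_S. change (Rb ^ S k) with (Rb * Rb ^ k). fold r q. lra.
  - eapply Rle_trans.
    + apply (sumR_le _ _ (fun _ => kap a * (INR k + 1) * (Rb * r) ^ 2 * q ^ 2)). intros i Hi. cbn [d2].
      set (z := zS a ns th x p k t0 i).
      set (z1 := sumR (ns k) (fun j : nat => pA th (S k) i j * d1 a ns th x p k t0 j)).
      set (z2 := sumR (ns k) (fun j : nat => pA th (S k) i j * d2 a ns th x p k t0 j)).
      eapply Rle_trans; [apply Rabs_triang|]. rewrite (Rabs_mult (rho2 a z)), (Rabs_mult (rho1 a z)).
      pose proof (rho1_bound a z). pose proof (rho2_bound a z). pose proof (kap_le1 a).
      pose proof (Rabs_pos (rho2 a z)). pose proof (Rabs_pos (rho1 a z)). pose proof (Rabs_pos z2).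
      assert (Hsq : Rabs (z1 ^ 2) = z1 ^ 2) by (apply Rabs_right; apply Rle_ge, pow2_ge_0).
      assert (Rabs (rho2 a z) * Rabs (z1 ^ 2) <= kap a * z1 ^ 2).
      { rewrite Hsq. apply Rmult_le_compat_r; [apply pow2_ge_0|auto]. }
      assert (Rabs (rho1 a z) * Rabs z2 <= Rabs z2) by nra.
      pose proof (arithF2 (kap a) Rb r q (INR k) z1 (Rabs z2) ltac:(lra) HR Hr Hq (pos_INR k)
         ltac:(apply sq_abs_le; rewrite Rmult_assoc; apply Hz1; auto) ltac:(apply Hz2; auto)).
      lra.
    + rewrite sumR_const, pw_S, S_INR. change (Rb ^ S k) with (Rb * Rb ^ k). fold r q.
      pose proof (INR_le_sq (ns (S k))). pose proof (kap_le1 a). pose proof (pos_INR k).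
      assert (0 <= kap a * (INR k + 1) * (Rb * r) ^ 2 * q ^ 2) by (repeat apply Rmult_le_pos; first [apply pow2_ge_0 | lra]).
      apply Rle_trans with ((kap a * (INR k + 1) * (Rb * r) ^ 2 * q ^ 2) * INR (ns (S k)) ^ 2).
      * rewrite Rmult_comm. apply Rmult_le_compat_l; auto.
      * right; ring.
Qed.

Lemma sum_indicator p n :
  sumR n (fun j => Rabs (if Nat.eqb j p then 1 else 0)) <= 1 /\
  ((n <= p)%nat -> sumR n (fun j => Rabs (if Nat.eqb j p then 1 else 0)) = 0).
Proof.
  induction n as [|n [IH1 IH2]]; simpl; [split; [lra| auto]|].
  destruct (Nat.eqb n p) eqn:E.
  - apply Nat.eqb_eq in E; subst. rewrite IH2 by lia. rewrite Rabs_R1. split; [lra| intros; lia].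
  - rewrite Rabs_R0. split; [lra|]. intros. rewrite IH2 by lia. lra.
Qed.

Lemma F_base a ns th x p Rb : (forall j, (j < ns 0)%nat -> Rabs (x j) <= 1) ->
  Ffacts a ns th x p Rb 0 (x p).
Proof.
  intros Hx. split; [|split].
  - intros j Hj. simpl. unfold upd. destruct (Nat.eqb j p) eqn:E.
    + apply Nat.eqb_eq in E; subst. auto.
    + auto.
  - simpl d1. unfold pw; simpl. rewrite Rmult_1_l. apply sum_indicator.
  - simpl d2. simpl INR. rewrite Rmult_0_r, !Rmult_0_l.
    replace (sumR (ns 0%nat) (fun _ => Rabs 0)) with (sumR (ns 0%nat) (fun _ => 0)).
    + rewrite sumR_const. lra.
    + apply sumR_ext. intros; rewrite Rabs_R0; auto.
Qed.

Lemma F_all a ns th x p Rb L : 1 <= Rb -> (forall j, (j < ns 0)%nat -> Rabs (x j) <= 1) ->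
  (forall k, (k < L)%nat -> layerA ns th Rb k) ->
  forall k, (k <= L)%nat -> Ffacts a ns th x p Rb k (x p).
Proof.
  intros HR Hx HA k. induction k; intros Hk.
  - apply F_base; auto.
  - apply F_step; [auto| apply HA; lia| apply IHk; lia].
Qed.

Definition Ev ns (th th' : params) k :=
  sumR (ns (S k)) (fun i => sumR (ns k) (fun j => Rabs (pA th (S k) i j - pA th' (S k) i j))
                              + Rabs (pb th (S k) i - pb th' (S k) i)).
Definition Ep ns th th' K := sumR K (fun k => Ev ns th th' k).

Definition Gfacts a ns th th' x p Rb k t0 :=
  Rb * sumR (ns k) (fun j => Rabs (hidden a ns th k (upd x p t0) j - hidden a ns th' k (upd x p t0) j))
    <= Ep ns th th' k * Rb ^ k * pw ns k /\
  Rb * sumR (ns k) (fun j => Rabs (d1 a ns th x p k t0 j - d1 a ns th' x p k t0 j))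
    <= 2 * INR k * Ep ns th th' k * (Rb ^ k) ^ 2 * pw ns k ^ 2 /\
  Rb * sumR (ns k) (fun j => Rabs (d2 a ns th x p k t0 j - d2 a ns th' x p k t0 j))
    <= kap a * (3 * INR k ^ 2 + INR k) * Ep ns th th' k * (Rb ^ k) ^ 3 * pw ns k ^ 3.

Lemma diff_bil n (c c' v v' : nat -> R) :
  sumR n (fun j => c j * v j) - sumR n (fun j => c' j * v' j) =
  sumR n (fun j => (c j - c' j) * v j) + sumR n (fun j => c' j * (v j - v' j)).
Proof. rewrite <- sumR_minus, <- sumR_plus. apply sumR_ext. intros; ring. Qed.

Lemma row_diff n (c c' v v' : nat -> R) M C V : 0 <= M -> 0 <= C ->
  (forall j, (j < n)%nat -> Rabs (c' j) <= C) ->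
  (forall j, (j < n)%nat -> Rabs (v j) <= M) ->
  sumR n (fun j => Rabs (v j - v' j)) <= V ->
  Rabs (sumR n (fun j => c j * v j) - sumR n (fun j => c' j * v' j))
    <= sumR n (fun j => Rabs (c j - c' j)) * M + C * V.
Proof.
  intros HM HC Hc Hv HV. rewrite diff_bil.
  eapply Rle_trans; [apply Rabs_triang|]. apply Rplus_le_compat.
  - apply lin_bound2; auto.
  - apply lin_bound; auto.
Qed.

Lemma G_base a ns th th' x p Rb t0 : Gfacts a ns th th' x p Rb 0 t0.
Proof.
  unfold Gfacts, Ep. simpl sumR. simpl d1. simpl d2. simpl hidden.
  assert (H : forall f : nat -> R, sumR (ns 0%nat) (fun j => Rabs (f j - f j)) = 0).
  { intros f. rewrite (sumR_ext _ _ (fun _ => 0)). rewrite sumR_const; lra.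
    intros; rewrite Rminus_diag, Rabs_R0; auto. }
  rewrite (H (fun j => upd x p t0 j)), (H (fun j => if Nat.eqb j p then 1 else 0)), (H (fun _ => 0)).
  repeat split; right; ring.
Qed.

Lemma arithG0 e E U : 0 <= e -> 0 <= E -> 1 <= U -> e + E * U <= (E + e) * U.
Proof. intros. nra. Qed.

Lemma arithG1 kp Rb U K0 e E A1 Z B : 0 <= kp <= 1 -> 1 <= Rb -> 1 <= U -> 0 <= K0 -> 0 <= e -> 0 <= E ->
  0 <= A1 <= (E + e) * U -> 0 <= Z <= Rb * U -> 0 <= B <= e * U + 2 * K0 * E * U ^ 2 ->
  kp * A1 * Z + B <= (2 * K0 + 2) * (E + e) * Rb * U ^ 2.
Proof.
  intros. assert (A1 * Z <= (E + e) * U * (Rb * U)) by (apply Rmult_le_compat; lra).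
  assert (0 <= A1 * Z) by (apply Rmult_le_pos; lra). assert (kp * (A1 * Z) <= A1 * Z) by nra.
  assert (e * U <= e * Rb * U ^ 2) by (assert (U <= Rb * U^2) by nra; nra).
  assert (2 * K0 * E * U ^ 2 <= 2 * K0 * E * Rb * U ^ 2).
  { assert (0 <= 2 * K0 * E * U ^ 2) by pos. nra. }
  assert (0 <= U^2) by nra.
  assert (K0 * e * Rb * U^2 >= 0) by (assert (0 <= K0 * e) by nra; assert (0 <= Rb * U^2) by nra; nra).
  assert (0 <= E * Rb * U ^ 2) by pos. lra.
Qed.

Lemma arithG2 kp Rb U K0 e E A1 Z Z' B Y C2 : 0 <= kp <= 1 -> 1 <= Rb -> 1 <= U -> 0 <= K0 -> 0 <= e -> 0 <= E ->
  0 <= A1 <= (E + e) * U -> 0 <= Z <= Rb * U -> 0 <= Z' <= Rb * U ->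
  0 <= B <= e * U + 2 * K0 * E * U ^ 2 ->
  0 <= Y <= Rb * (kp * K0 * U ^ 2) ->
  0 <= C2 <= e * (kp * K0 * U ^ 2) + kp * (3 * K0 ^ 2 + K0) * E * U ^ 3 ->
  2 * kp * A1 * Z ^ 2 + kp * B * (Z + Z') + kp * A1 * Y + C2
    <= kp * (3 * K0 ^ 2 + 7 * K0 + 4) * (E + e) * Rb ^ 2 * U ^ 3.
Proof.
  intros Hk HR HU HK0 He HE HA HZ HZ' HB HY HC.
  set (E' := E + e).
  set (W := E' * Rb ^ 2 * U ^ 3).
  assert (HU2 : 1 <= U ^ 2) by nra. assert (HU3 : 1 <= U ^ 3) by nra. assert (HR2 : 1 <= Rb ^ 2) by nra.
  assert (HW : 0 <= W) by (unfold W, E'; repeat apply Rmult_le_pos; lra).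
  assert (T1 : A1 * Z ^ 2 <= W).
  { assert (Z ^ 2 <= (Rb * U) ^ 2) by (apply pow_incr; lra).
    assert (0 <= Z^2) by nra.
    apply Rle_trans with ((E + e) * U * (Rb * U) ^ 2); [apply Rmult_le_compat; lra|].
    right; unfold W, E'; ring. }
  assert (T2 : B * (Z + Z') <= (2 + 4 * K0) * W).
  { apply Rle_trans with ((e * U + 2 * K0 * E * U ^ 2) * (2 * Rb * U)); [apply Rmult_le_compat; lra|].
    assert (e * U * (2 * Rb * U) <= 2 * W).
    { unfold W, E'. assert (e * (2 * Rb * U^2) <= (E + e) * (2 * Rb^2 * U^3)).
      { apply Rmult_le_compat; try lra. nra. assert (Rb * U^2 <= Rb^2 * U^3) by (apply Rmult_le_compat; nra). nra. }
      nra. }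
    assert (2 * K0 * E * U ^ 2 * (2 * Rb * U) <= 4 * K0 * W).
    { unfold W, E'. assert (Rb * U^3 <= Rb^2 * U^3) by (apply Rmult_le_compat_r; nra).
      assert (E * (Rb * U^3) <= (E + e) * (Rb^2 * U^3)) by (apply Rmult_le_compat; try pos; lra).
      assert (0 <= K0 * ((E + e) * (Rb^2 * U^3) - E * (Rb * U^3))) by (apply Rmult_le_pos; lra). nra. }
    nra. }
  assert (T3 : A1 * Y <= K0 * W).
  { apply Rle_trans with ((E + e) * U * (Rb * (kp * K0 * U ^ 2))); [apply Rmult_le_compat; lra|].
    unfold W, E'. assert (0 <= kp * K0) by nra.
    assert (kp * K0 <= K0) by nra.
    assert (0 <= (E + e) * U^3) by (apply Rmult_le_pos; nra).
    assert (Rb <= Rb^2) by nra.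
    assert ((E + e) * U * (Rb * (kp * K0 * U ^ 2)) = (kp * K0) * Rb * ((E + e) * U^3)) by ring.
    assert ((kp * K0) * Rb * ((E + e) * U^3) <= K0 * Rb^2 * ((E + e) * U^3)).
    { apply Rmult_le_compat_r; auto. apply Rmult_le_compat; nra. }
    nra. }
  assert (T4 : C2 <= kp * (3 * K0 ^ 2 + 2 * K0) * W).
  { unfold W, E'.
    assert (e * (kp * K0 * U ^ 2) <= kp * K0 * (e * Rb^2 * U^3)).
    { assert (e * U^2 <= e * Rb^2 * U^3).
      { assert (U^2 <= Rb^2 * U^3) by (assert (U^2 <= U^3) by nra; nra). nra. }
      assert (0 <= kp * K0) by nra. nra. }
    assert (kp * (3 * K0 ^ 2 + K0) * E * U ^ 3 <= kp * (3 * K0 ^ 2 + K0) * (E * Rb^2 * U^3)).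
    { assert (Ha : 0 <= kp * (3 * K0 ^ 2 + K0)) by pos.
      assert (Hb : E * U^3 <= E * Rb^2 * U^3) by (assert (0 <= E * U^3) by pos; nra).
      pose proof (Rmult_le_compat_l _ _ _ Ha Hb). lra. }
    assert (0 <= kp * K0 * (E * Rb^2 * U^3)) by pos.
    assert (0 <= kp * K0 ^ 2 * (e * Rb^2 * U^3)) by pos.
    nra. }
  assert (kp * (A1 * Y) <= kp * (K0 * W)) by (apply Rmult_le_compat_l; lra).
  assert (kp * K0 * W <= K0 * W) by (assert (0 <= K0 * W) by nra; nra).
  assert (kp * (B * (Z + Z')) <= kp * ((2 + 4 * K0) * W)) by (apply Rmult_le_compat_l; lra).
  assert (kp * (A1 * Z^2) <= kp * W) by (apply Rmult_le_compat_l; lra).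
  replace (kp * (3 * K0 ^ 2 + 7 * K0 + 4) * E' * Rb ^ 2 * U ^ 3) with (kp * (3 * K0 ^ 2 + 7 * K0 + 4) * W) by (unfold W; ring).
  lra.
Qed.

Lemma abs_prod_le u v U V : Rabs u <= U -> Rabs v <= V -> Rabs (u * v) <= U * V.
Proof. intros. rewrite Rabs_mult. apply Rmult_le_compat; auto; apply Rabs_pos. Qed.

Lemma d1_diff_bound r1 r1' y y' kp A1 :
  Rabs (r1 - r1') <= kp * A1 -> Rabs r1' <= 1 ->
  Rabs (r1 * y - r1' * y') <= kp * A1 * Rabs y + Rabs (y - y').
Proof.
  intros H1 H2. replace (r1 * y - r1' * y') with ((r1 - r1') * y + r1' * (y - y')) by ring.
  eapply Rle_trans; [apply Rabs_triang|]. apply Rplus_le_compat.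
  - apply abs_prod_le; [auto| apply Rle_refl].
  - rewrite <- (Rmult_1_l (Rabs (y - y'))). apply abs_prod_le; [auto| apply Rle_refl].
Qed.

Lemma d2_diff_bound r2 r2' r1 r1' y y' w w' kp A1 :
  Rabs (r2 - r2') <= 2 * kp * A1 -> Rabs r2' <= kp ->
  Rabs (r1 - r1') <= kp * A1 -> Rabs r1' <= 1 ->
  Rabs (r2 * y ^ 2 + r1 * w - (r2' * y' ^ 2 + r1' * w'))
   <= 2 * kp * A1 * Rabs y ^ 2 + kp * Rabs (y - y') * (Rabs y + Rabs y') + kp * A1 * Rabs w + Rabs (w - w').
Proof.
  intros H1 H2 H3 H4.
  replace (r2 * y ^ 2 + r1 * w - (r2' * y' ^ 2 + r1' * w')) with
    ((r2 - r2') * y ^ 2 + (r2' * ((y - y') * (y + y')) + ((r1 - r1') * w + r1' * (w - w')))) by ring.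
  eapply Rle_trans; [apply Rabs_triang|].
  assert (Rabs ((r2 - r2') * y ^ 2) <= 2 * kp * A1 * Rabs y ^ 2).
  { apply abs_prod_le; auto. rewrite <- RPow_abs. apply Rle_refl. }
  assert (Rabs (r2' * ((y - y') * (y + y'))) <= kp * (Rabs (y - y') * (Rabs y + Rabs y'))).
  { apply abs_prod_le; auto. apply abs_prod_le; [apply Rle_refl| apply Rabs_triang]. }
  assert (Rabs ((r1 - r1') * w + r1' * (w - w')) <= kp * A1 * Rabs w + Rabs (w - w')).
  { replace ((r1 - r1') * w + r1' * (w - w')) with (r1 * w - r1' * w') by ring. apply d1_diff_bound; auto. }
  eapply Rle_trans; [apply Rplus_le_compat; [eauto| apply Rabs_triang]|]. lra.
Qed.

Lemma Ev_nonneg ns th th' k : 0 <= Ev ns th th' k.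
Proof. unfold Ev. apply sumR_nonneg. intros. pose proof (Rabs_pos (pb th (S k) i - pb th' (S k) i)).
  pose proof (sumR_abs_nonneg (ns k) (fun j => pA th (S k) i j - pA th' (S k) i j)). lra. Qed.
Lemma Ep_nonneg ns th th' K : 0 <= Ep ns th th' K.
Proof. unfold Ep. apply sumR_nonneg. intros; apply Ev_nonneg. Qed.

Lemma G_row a ns th th' x p Rb k t0 i :
  1 <= Rb -> layerA ns th Rb k -> layerA ns th' Rb k ->
  Ffacts a ns th x p Rb k t0 -> Ffacts a ns th' x p Rb k t0 ->
  Gfacts a ns th th' x p Rb k t0 -> 1 <= pw ns k -> (i < ns (S k))%nat ->
  let E := Ep ns th th' k in let e := Ev ns th th' k in let K0 := INR k in
  let U := Rb ^ k * pw ns k in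
  Rabs (hidden a ns th (S k) (upd x p t0) i - hidden a ns th' (S k) (upd x p t0) i) <= (E + e) * U /\
  Rabs (d1 a ns th x p (S k) t0 i - d1 a ns th' x p (S k) t0 i) <= (2 * K0 + 2) * (E + e) * Rb * U ^ 2 /\
  Rabs (d2 a ns th x p (S k) t0 i - d2 a ns th' x p (S k) t0 i)
    <= kap a * (3 * K0 ^ 2 + 7 * K0 + 4) * (E + e) * Rb ^ 2 * U ^ 3.
Proof.
  intros HR HA HA' [F0 [F1 F2]] [F0' [F1' F2']] [G0 [G1 G2]] Hq Hi E e K0 U.
  pose proof (kap_le1 a) as Hk.
  assert (Hr : 1 <= Rb ^ k) by (apply pow_R1_Rle; lra).
  set (r := Rb ^ k) in *. set (q := pw ns k) in *.
  fold E in G0, G1, G2. fold K0 in F2, F2', G1, G2.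
  assert (HE : 0 <= E) by apply Ep_nonneg. assert (He : 0 <= e) by apply Ev_nonneg.
  assert (HK0 : 0 <= K0) by apply pos_INR.
  assert (HU : 1 <= U) by (unfold U; nra).
  set (rA := sumR (ns k) (fun j => Rabs (pA th (S k) i j - pA th' (S k) i j))).
  set (rb := Rabs (pb th (S k) i - pb th' (S k) i)).
  assert (Hrho : rA + rb <= e).
  { unfold rA, rb, e, Ev.
    apply (term_le _ (fun i => sumR (ns k) (fun j => Rabs (pA th (S k) i j - pA th' (S k) i j)) +
                               Rabs (pb th (S k) i - pb th' (S k) i))); auto.
    intros j _. pose proof (Rabs_pos (pb th (S k) j - pb th' (S k) j)).
    pose proof (sumR_abs_nonneg (ns k) (fun l => pA th (S k) j l - pA th' (S k) j l)). lra. }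
  assert (HrA : 0 <= rA) by apply sumR_abs_nonneg. assert (Hrb : 0 <= rb) by apply Rabs_pos.
  assert (HAi : forall j, (j < ns k)%nat -> Rabs (pA th (S k) i j) <= Rb) by (intros; apply HA; auto).
  assert (HAi' : forall j, (j < ns k)%nat -> Rabs (pA th' (S k) i j) <= Rb) by (intros; apply HA'; auto).
  set (z := zS a ns th x p k t0 i). set (z' := zS a ns th' x p k t0 i).
  set (z1 := sumR (ns k) (fun j => pA th (S k) i j * d1 a ns th x p k t0 j)).
  set (z1' := sumR (ns k) (fun j => pA th' (S k) i j * d1 a ns th' x p k t0 j)).
  set (z2 := sumR (ns k) (fun j => pA th (S k) i j * d2 a ns th x p k t0 j)).
  set (z2' := sumR (ns k) (fun j => pA th' (S k) i j * d2 a ns th' x p k t0 j)).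
  assert (HA1 : Rabs (z - z') <= (E + e) * U).
  { unfold z, z', zS.
    match goal with |- Rabs (?s + ?b - (?s' + ?b')) <= _ =>
      replace (s + b - (s' + b')) with ((s - s') + (b - b')) by ring end.
    eapply Rle_trans; [apply Rabs_triang|].
    pose proof (row_diff (ns k) (fun j => pA th (S k) i j) (fun j => pA th' (S k) i j)
      (fun j => hidden a ns th k (upd x p t0) j) (fun j => hidden a ns th' k (upd x p t0) j) 1 Rb
      (sumR (ns k) (fun j => Rabs (hidden a ns th k (upd x p t0) j - hidden a ns th' k (upd x p t0) j)))
      ltac:(lra) ltac:(lra) HAi' F0 (Rle_refl _)) as H.
    cbv beta in H. fold rA in H. fold rb.
    pose proof (arithG0 e E U He HE HU). unfold U in *. lra. }
  assert (Hz1 : Rabs z1 <= Rb * U).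
  { unfold U. apply lin_bound; auto; lra. }
  assert (Hz1' : Rabs z1' <= Rb * U).
  { unfold U. apply lin_bound; auto; lra. }
  assert (Hsup1 : forall j, (j < ns k)%nat -> Rabs (d1 a ns th x p k t0 j) <= r * q).
  { intros j Hj. eapply Rle_trans; [|apply F1].
    apply (term_le _ (fun j => Rabs (d1 a ns th x p k t0 j))); auto. intros; apply Rabs_pos. }
  assert (HB : Rabs (z1 - z1') <= e * U + 2 * K0 * E * U ^ 2).
  { pose proof (row_diff (ns k) (fun j => pA th (S k) i j) (fun j => pA th' (S k) i j)
      (fun j => d1 a ns th x p k t0 j) (fun j => d1 a ns th' x p k t0 j) (r * q) Rb
      (sumR (ns k) (fun j => Rabs (d1 a ns th x p k t0 j - d1 a ns th' x p k t0 j)))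
      ltac:(nra) ltac:(lra) HAi' Hsup1 (Rle_refl _)) as H.
    cbv beta in H. fold rA in H. unfold z1, z1'.
    assert (rA * (r * q) <= e * U) by (unfold U; apply Rmult_le_compat_r; nra).
    assert (2 * K0 * E * r ^ 2 * q ^ 2 = 2 * K0 * E * U ^ 2) by (unfold U; ring). lra. }
  assert (Hz2 : Rabs z2 <= Rb * (kap a * K0 * U ^ 2)).
  { replace (kap a * K0 * U ^ 2) with (kap a * K0 * r ^ 2 * q ^ 2) by (unfold U; ring).
    apply lin_bound; auto; lra. }
  assert (Hsup2 : forall j, (j < ns k)%nat -> Rabs (d2 a ns th x p k t0 j) <= kap a * K0 * U ^ 2).
  { intros j Hj. replace (kap a * K0 * U ^ 2) with (kap a * K0 * r ^ 2 * q ^ 2) by (unfold U; ring).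
    eapply Rle_trans; [|apply F2].
    apply (term_le _ (fun j => Rabs (d2 a ns th x p k t0 j))); auto. intros; apply Rabs_pos. }
  assert (HC2 : Rabs (z2 - z2') <= e * (kap a * K0 * U ^ 2) + kap a * (3 * K0 ^ 2 + K0) * E * U ^ 3).
  { pose proof (row_diff (ns k) (fun j => pA th (S k) i j) (fun j => pA th' (S k) i j)
      (fun j => d2 a ns th x p k t0 j) (fun j => d2 a ns th' x p k t0 j) (kap a * K0 * U ^ 2) Rb
      (sumR (ns k) (fun j => Rabs (d2 a ns th x p k t0 j - d2 a ns th' x p k t0 j)))
      ltac:(pos) ltac:(lra) HAi' Hsup2 (Rle_refl _)) as H.
    cbv beta in H. fold rA in H. unfold z2, z2'.
    assert (rA * (kap a * K0 * U ^ 2) <= e * (kap a * K0 * U ^ 2)) by (apply Rmult_le_compat_r; [pos|lra]).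
    assert (kap a * (3 * K0 ^ 2 + K0) * E * r ^ 3 * q ^ 3 = kap a * (3 * K0 ^ 2 + K0) * E * U ^ 3) by (unfold U; ring). lra. }
  assert (L0 : Rabs (rho a z - rho a z') <= 1 * Rabs (z - z')) by
    (apply (lip_of_deriv (rho a) (rho1 a)); [apply rho_deriv| apply rho1_bound]).
  assert (L1 : Rabs (rho1 a z - rho1 a z') <= kap a * Rabs (z - z')) by
    (apply (lip_of_deriv (rho1 a) (rho2 a)); [apply rho1_deriv| apply rho2_bound]).
  assert (L2 : Rabs (rho2 a z - rho2 a z') <= 2 * kap a * Rabs (z - z')) by
    (apply (lip_of_deriv (rho2 a) (rho3 a)); [apply rho2_deriv| apply rho3_bound]).
  split; [|split].
  - change (Rabs (rho a z - rho a z') <= (E + e) * U). lra.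
  - change (Rabs (rho1 a z * z1 - rho1 a z' * z1') <= (2 * K0 + 2) * (E + e) * Rb * U ^ 2).
    eapply Rle_trans; [apply d1_diff_bound; [apply L1| apply rho1_bound]|].
    apply arithG1; auto; split; try apply Rabs_pos; auto.
  - change (Rabs (rho2 a z * z1 ^ 2 + rho1 a z * z2 - (rho2 a z' * z1' ^ 2 + rho1 a z' * z2'))
       <= kap a * (3 * K0 ^ 2 + 7 * K0 + 4) * (E + e) * Rb ^ 2 * U ^ 3).
    eapply Rle_trans; [apply d2_diff_bound; [apply L2| apply rho2_bound| apply L1| apply rho1_bound]|].
    pose proof (arithG2 (kap a) Rb U K0 e E (Rabs (z - z')) (Rabs z1) (Rabs z1') (Rabs (z1 - z1'))
      (Rabs z2) (Rabs (z2 - z2')) Hk HR HU HK0 He HE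
      ltac:(split; [apply Rabs_pos| auto]) ltac:(split; [apply Rabs_pos| auto])
      ltac:(split; [apply Rabs_pos| auto]) ltac:(split; [apply Rabs_pos| auto])
      ltac:(split; [apply Rabs_pos| auto]) ltac:(split; [apply Rabs_pos| auto])).
    lra.
Qed.

Lemma G_step a ns th th' x p Rb k t0 :
  1 <= Rb -> layerA ns th Rb k -> layerA ns th' Rb k ->
  Ffacts a ns th x p Rb k t0 -> Ffacts a ns th' x p Rb k t0 ->
  Gfacts a ns th th' x p Rb k t0 -> 1 <= pw ns k ->
  Gfacts a ns th th' x p Rb (S k) t0.
Proof.
  intros HR HA HA' HF HF' HG Hq.
  pose proof (fun i Hi => G_row a ns th th' x p Rb k t0 i HR HA HA' HF HF' HG Hq Hi) as Hrow.
  cbv zeta in Hrow.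
  pose proof (kap_le1 a) as Hk.
  assert (Hr : 1 <= Rb ^ k) by (apply pow_R1_Rle; lra).
  set (r := Rb ^ k) in *. set (q := pw ns k) in *.
  set (E := Ep ns th th' k) in *. set (e := Ev ns th th' k) in *. set (K0 := INR k) in *.
  assert (HE : 0 <= E) by apply Ep_nonneg. assert (He : 0 <= e) by apply Ev_nonneg.
  assert (HK0 : 0 <= K0) by apply pos_INR.
  set (n := INR (ns (S k))).
  assert (Hn : 0 <= n) by apply pos_INR.
  pose proof (INR_le_sq (ns (S k))) as Hn2. pose proof (INR_le_cube (ns (S k))) as Hn3. fold n in Hn2, Hn3.
  assert (HEp : Ep ns th th' (S k) = E + e) by reflexivity.
  unfold Gfacts. rewrite HEp, pw_S, S_INR. fold q n K0.
  change (Rb ^ S k) with (Rb * r).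
  assert (HU : 1 <= r * q) by nra.
  split; [|split].
  - eapply Rle_trans.
    + apply Rmult_le_compat_l; [lra|]. apply (sumR_le _ _ (fun _ => (E + e) * (r * q))).
      intros i Hi. apply Hrow; auto.
    + rewrite sumR_const. fold n. right; ring.
  - eapply Rle_trans.
    + apply Rmult_le_compat_l; [lra|]. apply (sumR_le _ _ (fun _ => (2 * K0 + 2) * (E + e) * Rb * (r * q) ^ 2)).
      intros i Hi. apply Hrow; auto.
    + rewrite sumR_const. fold n.
      assert (Hc : 0 <= (2 * K0 + 2) * (E + e) * Rb ^ 2 * (r * q) ^ 2) by pos.
      apply Rle_trans with (((2 * K0 + 2) * (E + e) * Rb ^ 2 * (r * q) ^ 2) * n); [right; ring|].
      apply Rle_trans with (((2 * K0 + 2) * (E + e) * Rb ^ 2 * (r * q) ^ 2) * n ^ 2); [apply Rmult_le_compat_l; auto|].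
      right; ring.
  - eapply Rle_trans.
    + apply Rmult_le_compat_l; [lra|].
      apply (sumR_le _ _ (fun _ => kap a * (3 * K0 ^ 2 + 7 * K0 + 4) * (E + e) * Rb ^ 2 * (r * q) ^ 3)).
      intros i Hi. apply Hrow; auto.
    + rewrite sumR_const. fold n.
      assert (Hc : 0 <= kap a * (3 * K0 ^ 2 + 7 * K0 + 4) * (E + e) * Rb ^ 3 * (r * q) ^ 3) by pos.
      apply Rle_trans with ((kap a * (3 * K0 ^ 2 + 7 * K0 + 4) * (E + e) * Rb ^ 3 * (r * q) ^ 3) * n); [right; ring|].
      apply Rle_trans with ((kap a * (3 * K0 ^ 2 + 7 * K0 + 4) * (E + e) * Rb ^ 3 * (r * q) ^ 3) * n ^ 3); [apply Rmult_le_compat_l; auto|].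
      right; ring.
Qed.

Lemma prod_zero_up ns k m : prod_widths ns k = 0%nat -> prod_widths ns (m + k) = 0%nat.
Proof. intros H. induction m; simpl; auto. rewrite IHm. auto. Qed.

Lemma pw_pos_down ns K k : 1 <= pw ns K -> (k <= K)%nat -> 1 <= pw ns k.
Proof.
  intros H Hk. unfold pw in *. replace 1 with (INR 1) by reflexivity. apply le_INR.
  destruct (Nat.eq_dec (prod_widths ns k) 0) as [E|E]; [|lia].
  exfalso. pose proof (prod_zero_up ns k (K - k) E) as E2. replace (K - k + k)%nat with K in E2 by lia.
  rewrite E2 in H. simpl in H. lra.
Qed.

Lemma G_all a ns th th' x p Rb L : 1 <= Rb -> (forall j, (j < ns 0)%nat -> Rabs (x j) <= 1) ->
  (forall k, (k < L)%nat -> layerA ns th Rb k) -> (forall k, (k < L)%nat -> layerA ns th' Rb k) ->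
  1 <= pw ns L -> forall k, (k <= L)%nat -> Gfacts a ns th th' x p Rb k (x p).
Proof.
  intros HR Hx HA HA' HL k. induction k; intros Hk.
  - apply G_base.
  - apply G_step; [auto| apply HA; lia| apply HA'; lia|
      apply (F_all a ns th x p Rb L); auto; lia| apply (F_all a ns th' x p Rb L); auto; lia|
      apply IHk; lia| apply (pw_pos_down ns L); auto; lia].
Qed.

Lemma cs_pair u1 u2 c1 c2 w1 w2 : 0 <= u1 -> 0 <= u2 -> 0 <= c1 -> 0 <= c2 -> 0 <= w1 -> 0 <= w2 ->
  u1 ^ 2 <= c1 * w1 -> u2 ^ 2 <= c2 * w2 -> (u1 + u2) ^ 2 <= (c1 + c2) * (w1 + w2).
Proof.
  intros. set (X := c1 * w2). set (Y := c2 * w1).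
  assert (HX : 0 <= X) by (unfold X; pos). assert (HY : 0 <= Y) by (unfold Y; pos).
  assert (H7 : (u1 * u2) ^ 2 <= X * Y).
  { replace ((u1 * u2) ^ 2) with (u1 ^ 2 * u2 ^ 2) by ring.
    replace (X * Y) with ((c1 * w1) * (c2 * w2)) by (unfold X, Y; ring).
    apply Rmult_le_compat; auto; apply pow2_ge_0. }
  assert (H8 : (2 * (u1 * u2)) ^ 2 <= (X + Y) ^ 2) by (pose proof (pow2_ge_0 (X - Y)); nra).
  assert (H9 : 2 * (u1 * u2) <= X + Y).
  { apply Rsqr_incr_0_var; [|lra]. unfold Rsqr. nra. }
  unfold X, Y in H9. nra.
Qed.

Lemma cs_sum n (u c w : nat -> R) :
  (forall j, (j < n)%nat -> 0 <= u j /\ 0 <= c j /\ 0 <= w j /\ u j ^ 2 <= c j * w j) ->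
  sumR n u ^ 2 <= sumR n c * sumR n w.
Proof.
  induction n; intros H; simpl sumR; [lra|].
  destruct (H n ltac:(lia)) as [H1 [H2 [H3 H4]]].
  apply cs_pair; auto; first [apply IHn; intros; apply H; lia | apply sumR_nonneg; intros; apply H; lia].
Qed.

Lemma num_params_S ns L : num_params ns (S L) = (num_params ns L + ns (S L) * ns L + ns (S L))%nat.
Proof. reflexivity. Qed.

Lemma num_params_INR ns L :
  sumR L (fun k => INR (ns (S k)) * (INR (ns k) + 1)) = INR (num_params ns L).
Proof.
  induction L; simpl sumR; [reflexivity|]. rewrite IHL, num_params_S, !plus_INR, mult_INR. ring.
Qed.

Lemma Ep_le ns th th' L : Ep ns th th' L <= sqrt (INR (num_params ns L)) * param_dist ns L th th'.
Proof.
  set (inner := fun k => sumR (ns (S k)) (fun i =>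
            sumR (ns k) (fun j => (pA th (S k) i j - pA th' (S k) i j) ^ 2)
            + (pb th (S k) i - pb th' (S k) i) ^ 2)).
  assert (Hrow : forall k i,
    (sumR (ns k) (fun j => Rabs (pA th (S k) i j - pA th' (S k) i j)) + Rabs (pb th (S k) i - pb th' (S k) i)) ^ 2
    <= (INR (ns k) + 1) * (sumR (ns k) (fun j => (pA th (S k) i j - pA th' (S k) i j) ^ 2)
            + (pb th (S k) i - pb th' (S k) i) ^ 2)).
  { intros k i. apply cs_pair; try apply Rabs_pos; try apply sumR_abs_nonneg.
    - pose proof (pos_INR (ns k)); lra.
    - lra.
    - apply sumR_nonneg; intros; apply pow2_ge_0.
    - apply pow2_ge_0.
    - replace (INR (ns k)) with (sumR (ns k) (fun _ => 1)) by (rewrite sumR_const; ring).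
      apply cs_sum. intros j _. repeat split; try apply Rabs_pos; try lra; try apply pow2_ge_0.
      rewrite pow2_abs. lra.
    - rewrite pow2_abs. lra. }
  assert (Hlay : forall k, Ev ns th th' k ^ 2 <= (INR (ns (S k)) * (INR (ns k) + 1)) * inner k).
  { intros k. unfold Ev, inner.
    replace (INR (ns (S k)) * (INR (ns k) + 1)) with (sumR (ns (S k)) (fun _ => INR (ns k) + 1)) by (rewrite sumR_const; ring).
    apply cs_sum. intros i _. repeat split.
    - pose proof (Rabs_pos (pb th (S k) i - pb th' (S k) i)).
      pose proof (sumR_abs_nonneg (ns k) (fun j => pA th (S k) i j - pA th' (S k) i j)). lra.
    - pose proof (pos_INR (ns k)); lra.
    - pose proof (pow2_ge_0 (pb th (S k) i - pb th' (S k) i)).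
      pose proof (sumR_nonneg (ns k) (fun j => (pA th (S k) i j - pA th' (S k) i j) ^ 2) ltac:(intros; apply pow2_ge_0)). lra.
    - apply Hrow. }
  assert (Htot : Ep ns th th' L ^ 2 <= INR (num_params ns L) * sumR L inner).
  { unfold Ep. rewrite <- num_params_INR. apply cs_sum. intros k _. repeat split.
    - apply Ev_nonneg.
    - pose proof (pos_INR (ns k)); pose proof (pos_INR (ns (S k))); pos.
    - unfold inner. apply sumR_nonneg. intros i _.
      pose proof (pow2_ge_0 (pb th (S k) i - pb th' (S k) i)).
      pose proof (sumR_nonneg (ns k) (fun j => (pA th (S k) i j - pA th' (S k) i j) ^ 2) ltac:(intros; apply pow2_ge_0)). lra.
    - apply Hlay. }
  unfold param_dist. fold inner.
  assert (Hin : 0 <= sumR L inner).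
  { apply sumR_nonneg. intros k _. unfold inner. apply sumR_nonneg. intros i _.
    pose proof (pow2_ge_0 (pb th (S k) i - pb th' (S k) i)).
    pose proof (sumR_nonneg (ns k) (fun j => (pA th (S k) i j - pA th' (S k) i j) ^ 2) ltac:(intros; apply pow2_ge_0)). lra. }
  rewrite <- sqrt_mult by (try apply pos_INR; auto).
  rewrite <- (sqrt_pow2 (Ep ns th th' L)) by apply Ep_nonneg.
  apply sqrt_le_1_alt. auto.
Qed.

Theorem lemma5p3 (a : activation) (d L : nat) (ns : nat -> nat) (Rb : R)
  (Omega : (nat -> R) -> Prop) (th th' : params) :
  1 <= Rb -> (2 <= L)%nat -> ns 0%nat = d -> ns L = 1%nat ->
  (forall x, Omega x -> forall i, (i < d)%nat -> -1 < x i < 1) ->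
  params_bounded ns L Rb th -> params_bounded ns L Rb th' ->
  forall (p : nat) (x : nat -> R), (p < d)%nat -> Omega x ->
  Rabs (dxx (net a ns L th) p x - dxx (net a ns L th') p x)
  <= 2 * INR (L - 1) * INR L * eta a * sqrt (INR (num_params ns L))
     * INR (prod_widths ns (L - 1)) ^ 3 * Rb ^ (3 * L - 3)
     * param_dist ns L th th'.
Proof.
  intros HR HL Hd HnL HOm Hth Hth' p x Hp Hx.
  destruct L as [|K]; [lia|].
  replace (S K - 1)%nat with K by lia.
  replace (3 * S K - 3)%nat with (K * 3)%nat by lia. rewrite pow_mult.
  rewrite !dxx_net.
  assert (HA : forall k, (k < S K)%nat -> layerA ns th Rb k).
  { intros k Hk i j Hi Hj. destruct (Hth (S k) ltac:(lia)) as [H _].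
    apply H; auto. replace (S k - 1)%nat with k by lia. auto. }
  assert (HA' : forall k, (k < S K)%nat -> layerA ns th' Rb k).
  { intros k Hk i j Hi Hj. destruct (Hth' (S k) ltac:(lia)) as [H _].
    apply H; auto. replace (S k - 1)%nat with k by lia. auto. }
  assert (Hx0 : forall j, (j < ns 0)%nat -> Rabs (x j) <= 1).
  { intros j Hj. rewrite Hd in Hj. destruct (HOm x Hx j Hj). apply Rabs_le; lra. }
  destruct (F_all a ns th x p Rb (S K) HR Hx0 HA K ltac:(lia)) as [F0 [F1 F2]].
  destruct (F_all a ns th' x p Rb (S K) HR Hx0 HA' K ltac:(lia)) as [F0' [F1' F2']].
  pose proof (kap_le1 a) as Hk.
  assert (Hr : 1 <= Rb ^ K) by (apply pow_R1_Rle; lra).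
  fold (pw ns K).
  set (r := Rb ^ K) in *. set (q := pw ns K) in *. set (K0 := INR K) in *.
  assert (HK0 : 0 <= K0) by apply pos_INR.
  assert (Hq0 : 0 <= q) by apply pw_nonneg.
  assert (HAK : forall j, (j < ns K)%nat -> Rabs (pA th (S K) 0 j) <= Rb) by (intros; apply HA; auto; rewrite HnL; lia).
  assert (HAK' : forall j, (j < ns K)%nat -> Rabs (pA th' (S K) 0 j) <= Rb) by (intros; apply HA'; auto; rewrite HnL; lia).
  assert (Hdist : 0 <= param_dist ns (S K) th th') by apply sqrt_pos.
  assert (Hsq : 0 <= sqrt (INR (num_params ns (S K)))) by apply sqrt_pos.
  assert (Heta : 0 <= eta a) by (destruct a; simpl; lra).
  destruct (Rle_lt_dec 1 q) as [Hq|Hq].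
  -
    destruct (G_all a ns th th' x p Rb K HR Hx0 ltac:(intros; apply HA; lia) ltac:(intros; apply HA'; lia) Hq K ltac:(lia))
      as [G0 [G1 G2]].
    fold K0 r q in G2.
    set (E := Ep ns th th' K) in *. set (e := Ev ns th th' K).
    assert (HE : 0 <= E) by apply Ep_nonneg. assert (He : 0 <= e) by apply Ev_nonneg.
    assert (Hsup2 : forall j, (j < ns K)%nat -> Rabs (d2 a ns th x p K (x p) j) <= kap a * K0 * r ^ 2 * q ^ 2).
    { intros j Hj. eapply Rle_trans; [|apply F2].
      apply (term_le _ (fun j => Rabs (d2 a ns th x p K (x p) j))); auto. intros; apply Rabs_pos. }
    pose proof (row_diff (ns K) (fun j => pA th (S K) 0 j) (fun j => pA th' (S K) 0 j)
      (fun j => d2 a ns th x p K (x p) j) (fun j => d2 a ns th' x p K (x p) j) (kap a * K0 * r ^ 2 * q ^ 2) Rb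
      (sumR (ns K) (fun j => Rabs (d2 a ns th x p K (x p) j - d2 a ns th' x p K (x p) j)))
      ltac:(pos) ltac:(lra) HAK' Hsup2 (Rle_refl _)) as H.
    cbv beta in H.
    set (rA := sumR (ns K) (fun j => Rabs (pA th (S K) 0 j - pA th' (S K) 0 j))) in H.
    assert (HrA : rA <= e).
    { apply Rle_trans with (rA + Rabs (pb th (S K) 0 - pb th' (S K) 0)); [pose proof (Rabs_pos (pb th (S K) 0 - pb th' (S K) 0)); lra|].
      unfold rA, e, Ev.
      apply (term_le _ (fun i => sumR (ns K) (fun j => Rabs (pA th (S K) i j - pA th' (S K) i j)) +
                               Rabs (pb th (S K) i - pb th' (S K) i))); [|rewrite HnL; lia].
      intros j _. pose proof (Rabs_pos (pb th (S K) j - pb th' (S K) j)).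
      pose proof (sumR_abs_nonneg (ns K) (fun l => pA th (S K) j l - pA th' (S K) l l)).
      pose proof (sumR_abs_nonneg (ns K) (fun l => pA th (S K) j l - pA th' (S K) j l)). lra. }
    assert (HrA0 : 0 <= rA) by apply sumR_abs_nonneg.
    assert (HEp : Ep ns th th' (S K) = E + e) by reflexivity.
    pose proof (Ep_le ns th th' (S K)) as HCS. rewrite HEp in HCS.
    assert (HU : 1 <= r * q) by nra.
    assert (Hmain : Rabs (sumR (ns K) (fun j => pA th (S K) 0 j * d2 a ns th x p K (x p) j) -
                          sumR (ns K) (fun j => pA th' (S K) 0 j * d2 a ns th' x p K (x p) j))
                    <= kap a * (3 * K0 ^ 2 + K0) * (E + e) * (r * q) ^ 3).
    { eapply Rle_trans; [apply H|].
      assert (rA * (kap a * K0 * r ^ 2 * q ^ 2) <= e * (kap a * (3 * K0 ^ 2 + K0) * (r * q) ^ 3)).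
      { apply Rmult_le_compat; try pos.
        assert (K0 <= 3 * K0 ^ 2 + K0) by nra.
        assert ((r * q) ^ 2 <= (r * q) ^ 3) by nra.
        replace (kap a * K0 * r ^ 2 * q ^ 2) with (kap a * (K0 * (r * q) ^ 2)) by ring.
        replace (kap a * (3 * K0 ^ 2 + K0) * (r * q) ^ 3) with (kap a * ((3 * K0 ^ 2 + K0) * (r * q) ^ 3)) by ring.
        apply Rmult_le_compat_l; [lra|]. apply Rmult_le_compat; try pos; lra. }
      assert (kap a * (3 * K0 ^ 2 + K0) * E * r ^ 3 * q ^ 3 = E * (kap a * (3 * K0 ^ 2 + K0) * (r * q) ^ 3)) by ring.
      lra. }
    eapply Rle_trans; [apply Hmain|].
    replace (INR (S K)) with (K0 + 1) by (rewrite S_INR; auto).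
    pose proof (kap_eta a) as Hke.
    assert (Hc : kap a * (3 * K0 ^ 2 + K0) <= 2 * K0 * (K0 + 1) * eta a) by nra.
    assert (H3 : 0 <= (r * q) ^ 3) by pos.
    assert (H4 : 0 <= E + e) by lra.
    apply Rle_trans with (2 * K0 * (K0 + 1) * eta a * (E + e) * (r * q) ^ 3).
    + assert (0 <= (E + e) * (r * q) ^ 3) by pos.
      replace (kap a * (3 * K0 ^ 2 + K0) * (E + e) * (r * q) ^ 3) with ((kap a * (3 * K0 ^ 2 + K0)) * ((E + e) * (r * q) ^ 3)) by ring.
      replace (2 * K0 * (K0 + 1) * eta a * (E + e) * (r * q) ^ 3) with ((2 * K0 * (K0 + 1) * eta a) * ((E + e) * (r * q) ^ 3)) by ring.
      apply Rmult_le_compat_r; auto.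
    + assert (0 <= 2 * K0 * (K0 + 1) * eta a * (r * q) ^ 3) by pos.
      replace (2 * K0 * (K0 + 1) * eta a * (E + e) * (r * q) ^ 3) with ((2 * K0 * (K0 + 1) * eta a * (r * q) ^ 3) * (E + e)) by ring.
      replace (2 * K0 * (K0 + 1) * eta a * sqrt (INR (num_params ns (S K))) * q ^ 3 * r ^ 3 * param_dist ns (S K) th th')
        with ((2 * K0 * (K0 + 1) * eta a * (r * q) ^ 3) * (sqrt (INR (num_params ns (S K))) * param_dist ns (S K) th th')) by ring.
      apply Rmult_le_compat_l; auto.
  -
    assert (Hq0' : q = 0).
    { unfold q, pw in *. destruct (prod_widths ns K); [reflexivity|]. rewrite S_INR in Hq. pose proof (pos_INR n). lra. }
    rewrite Hq0' in F2, F2'.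
    assert (Z1 : Rabs (sumR (ns K) (fun j => pA th (S K) 0 j * d2 a ns th x p K (x p) j)) <= Rb * 0).
    { apply lin_bound; auto; try lra. }
    assert (Z2 : Rabs (sumR (ns K) (fun j => pA th' (S K) 0 j * d2 a ns th' x p K (x p) j)) <= Rb * 0).
    { apply lin_bound; auto; try lra. }
    rewrite Hq0'.
    eapply Rle_trans; [apply Rabs_triang|]. rewrite Rabs_Ropp. right. 
    assert (Rabs (sumR (ns K) (fun j => pA th (S K) 0 j * d2 a ns th x p K (x p) j)) = 0).
    { pose proof (Rabs_pos (sumR (ns K) (fun j => pA th (S K) 0 j * d2 a ns th x p K (x p) j))). lra. }
    assert (Rabs (sumR (ns K) (fun j => pA th' (S K) 0 j * d2 a ns th' x p K (x p) j)) = 0).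
    { pose proof (Rabs_pos (sumR (ns K) (fun j => pA th' (S K) 0 j * d2 a ns th' x p K (x p) j))). lra. }
    rewrite H, H0. ring.
Qed.
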